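(* When $n$ agents have additive valuations over chores and equal entitlements, the AlgChores allocation algorithm gives every agent $i$ a bundle of cost at most $\frac{4n-1}{3n}APS_i$.
   Context: A set $\mathcal{M}$ of $m$ indivisible chores is allocated to $n$ agents, each agent $i$ having an additive disvaluation (cost) function $c_i$ and entitlement (responsibility) $b_i=\frac{1}{n}$. The anyprice share for chores is $APS(c_i,b_i)=\max_{P}\min_{\{S\subseteq\mathcal{M}\,:\,\sum_{j\in S}p_j\ge b_i\}} c_i(S)$, where $P=(p_1,\ldots,p_m)$ ranges over nonnegative price vectors with $\sum_j p_j=1$. An instance is identically ordered (IDO) if chores can be indexed $e_1,\ldots,e_m$ so that $c_i(e_j)\ge c_i(e_k)$ for every agent $i$ and every $j<k$. AlgChores (of Barman and Krishnamurthy 2020), on an IDO instance: start with all bundles empty; for $r=1,\ldots,m$, choose an agent $i$ who envies no other agent, add chore $e_r$ to her bundle, and then resolve envy cycles (by rotating bundles along cycles in the envy graph); output the resulting allocation. On general instances, AlgChores is run via the standard reduction to IDO instances, which preserves the approximation guarantee. *)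

(* Defs.v *)
From HB Require Import structures.
From mathcomp Require Import all_boot all_order all_algebra.
From mathcomp Require Import classical_sets reals.
Set Implicit Arguments. Unset Strict Implicit. Unset Printing Implicit Defensive.
Import Order.TTheory GRing.Theory Num.Theory.
Local Open Scope ring_scope.

(* Agents are 'I_n, chores are 'I_m (chore e_{r+1} of the paper = index r). *)
Section Defs.
Variables (R : realType) (n m : nat).

Definition bcost (ci : 'I_m -> R) (S : {set 'I_m}) : R := \sum_(j in S) ci j.

Definition price_vector (p : 'I_m -> R) : Prop :=
  (forall j, 0 <= p j) /\ \sum_j p j = 1.

(* min_{S : p(S) >= b} c_i(S)  (the family contains setT whenever b <= 1) *)
Definition aps_value (ci : 'I_m -> R) (b : R) (p : 'I_m -> R) : R :=
  \big[Num.min/bcost ci (finset.setT : {set 'I_m})]_(S : {set 'I_m} | b <= \sum_(j in S) p j) bcost ci S.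

(* anyprice share for chores: max over price vectors (attained; sup over the set of values) *)
Definition APS (ci : 'I_m -> R) (b : R) : R :=
  sup [set v | exists p, price_vector p /\ v = aps_value ci b p].

Definition alloc := 'I_n -> {set 'I_m}.

Definition envies (c : 'I_n -> 'I_m -> R) (A : alloc) (i k : 'I_n) : Prop :=
  bcost (c i) (A k) < bcost (c i) (A i).

Definition envy_cycle (c : 'I_n -> 'I_m -> R) (A : alloc) (s : seq 'I_n) : Prop :=
  [/\ s != [::], uniq s & forall x, x \in s -> envies c A x (next s x)].

Definition rotate (c : 'I_n -> 'I_m -> R) (A A' : alloc) : Prop :=
  exists s, envy_cycle c A s /\
    forall x, A' x = if x \in s then A (next s x) else A x.

Inductive rotations (c : 'I_n -> 'I_m -> R) : alloc -> alloc -> Prop :=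
| rot_refl A : rotations c A A
| rot_step A B C : rotate c A B -> rotations c B C -> rotations c A C.

Definition envy_acyclic (c : 'I_n -> 'I_m -> R) (A : alloc) : Prop :=
  ~ exists s, envy_cycle c A s.

Definition add_chore (A : alloc) (i : 'I_n) (x : 'I_m) : alloc :=
  fun k => if k == i then x |: A k else A k.

Definition empty_alloc : alloc := fun _ => (finset.set0 : {set 'I_m}).

(* AlgChores on an IDO instance c: after processing r chores the state is A. *)
Inductive algchores_ido_reach (c : 'I_n -> 'I_m -> R) : nat -> alloc -> Prop :=
| ido_start : algchores_ido_reach c 0 empty_alloc
| ido_step (j : 'I_m) (A A' : alloc) (i : 'I_n) :
    algchores_ido_reach c j A ->
    (forall k, ~ envies c A i k) ->
    rotations c (add_chore A i j) A' ->
    envy_acyclic c A' ->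
    algchores_ido_reach c j.+1 A'.

Definition algchores_ido (c : 'I_n -> 'I_m -> R) (A : alloc) : Prop :=
  algchores_ido_reach c m A.

Definition IDO (c : 'I_n -> 'I_m -> R) : Prop :=
  forall i (j k : 'I_m), (j <= k)%N -> c i k <= c i j.

Definition ido_cost (c : 'I_n -> 'I_m -> R) : 'I_n -> 'I_m -> R :=
  fun i j => nth 0 (sort (fun x y => y <= x) [seq c i k | k <- enum 'I_m]) j.

(* standard reduction back to the original instance: the indices are processed
   from the last (cheapest) one e_m down to e_1; the owner (in the IDO
   allocation A') of the current index picks a remaining chore of minimum cost
   for her.  State: (number of unprocessed indices, bundles, remaining chores). *)
Inductive reduce_reach (c : 'I_n -> 'I_m -> R) (A' : alloc) :
  nat -> alloc -> {set 'I_m} -> Prop :=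
| red_start : reduce_reach c A' m empty_alloc (finset.setT : {set 'I_m})
| red_step (j : 'I_m) (B : alloc) (T : {set 'I_m}) (i : 'I_n) (x : 'I_m) :
    reduce_reach c A' j.+1 B T ->
    j \in A' i ->
    x \in T ->
    (forall y, y \in T -> c i x <= c i y) ->
    reduce_reach c A' j (add_chore B i x) (T :\ x).

Definition algchores (c : 'I_n -> 'I_m -> R) (B : alloc) : Prop :=
  exists A', algchores_ido (ido_cost c) A' /\
    exists T, reduce_reach c A' 0 B T.
End Defs.

(* Main.v *)
Require Import Defs.
From HB Require Import structures.
From mathcomp Require Import all_boot all_order all_algebra.
From mathcomp Require Import classical_sets reals.
From mathcomp Require Import lra zify.
Set Implicit Arguments. Unset Strict Implicit. Unset Printing Implicit Defensive.
Import Order.TTheory GRing.Theory Num.Theory.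
Local Open Scope ring_scope.

Section Aux.
Variables (R : realType) (n m : nat).

Lemma aps_value_le_top (ci : 'I_m -> R) b p : aps_value ci b p <= bcost ci [set: 'I_m].
Proof.
rewrite /aps_value; elim/big_rec: _ => // S x _ H.
by rewrite ge_min H orbT.
Qed.

Lemma aps_lb (ci : 'I_m -> R) (b : R) (p : 'I_m -> R) (z : R) :
  price_vector p -> b <= 1 ->
  (forall S : {set 'I_m}, b <= \sum_(j in S) p j -> z <= bcost ci S) -> z <= APS ci b.
Proof.
move=> [p0 p1] b1 HS.
have H1 : z <= aps_value ci b p.
  rewrite /aps_value; elim/big_rec: _ => [|S x PS Hx].
    apply: HS; rewrite (eq_bigl (fun j => true)); first by rewrite p1.
    by move=> j; rewrite inE.
  by rewrite le_min Hx HS.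
apply: (le_trans H1); apply: ub_le_sup; last by exists p.
exists (bcost ci [set: 'I_m]) => y [q [_ ->]]; exact: aps_value_le_top.
Qed.

Lemma aps_lb_perm (ci d : 'I_m -> R) (sg : 'I_m -> 'I_m) (b : R) (p : 'I_m -> R) (z : R) :
  injective sg -> (forall k, d k = ci (sg k)) ->
  price_vector p -> b <= 1 ->
  (forall S : {set 'I_m}, b <= \sum_(j in S) p j -> z <= bcost d S) -> z <= APS ci b.
Proof.
move=> inj dE [p0 p1] b1 HS.
pose q x := p (invF inj x).
have sumq (S : {set 'I_m}) : \sum_(x in S) q x = \sum_(k in sg @^-1: S) p k.
  rewrite (reindex_inj inj); apply: eq_big => k; first by rewrite inE.
  by move=> _; rewrite /q invF_f.
apply: (@aps_lb _ _ q) => //.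
  split; first by move=> x; exact: p0.
  have := sumq [set: 'I_m].
  rewrite (eq_bigl (fun x => true)); last by move=> x; rewrite inE.
  move=> ->; rewrite -p1; apply: eq_bigl => k; by rewrite !inE.
move=> S HbS; rewrite sumq in HbS; apply: (le_trans (HS _ HbS)).
rewrite /bcost [in X in _ <= X](reindex_inj inj) /=; rewrite le_eqVlt; apply/orP; left; apply/eqP/eq_big => k; first by rewrite inE.
by move=> _; rewrite dE.
Qed.

Lemma ido_perm (c : 'I_n -> 'I_m -> R) (i : 'I_n) :
  exists sg : 'I_m -> 'I_m, [/\ injective sg,
    (forall k, ido_cost c i k = c i (sg k)) &
    (forall k l : 'I_m, (k <= l)%N -> c i (sg l) <= c i (sg k))].
Proof.
pose leT := fun x y : 'I_m => c i y <= c i x.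
pose sl := sort leT (enum 'I_m).
have szsl : size sl = m by rewrite size_sort size_enum_ord.
have usl : uniq sl by rewrite sort_uniq enum_uniq.
have tr : transitive leT by move=> x y z; rewrite /leT => h1 h2; exact: le_trans h2 h1.
have srt : sorted leT sl by apply: sort_sorted => x y; rewrite /leT le_total.
exists (fun k => nth k sl k); split.
- move=> k l /eqP; rewrite (set_nth_default k l) ?szsl // nth_uniq ?szsl //.
  by move/eqP/val_inj.
- move=> k; rewrite /ido_cost (_ : sort _ _ = map (c i) sl); last by rewrite /sl (map_sort (leT := fun x y : R => y <= x)).
  by rewrite (nth_map k) ?szsl.
- move=> k l kl; rewrite (set_nth_default k l) ?szsl //.
  apply: (sorted_leq_nth tr) => //; first by move=> x; rewrite /leT.
  by rewrite inE szsl. by rewrite inE szsl.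
Qed.

Lemma card_prefix (j : nat) (hj : (j <= m)%N) : (#|[set k : 'I_m | (k < j)%N]| <= j)%N.
Proof.
apply: (@leq_trans #|widen_ord hj @: [set: 'I_j]|); last first.
  by apply: (leq_trans (leq_imset_card _ _)); rewrite cardsT card_ord.
apply: subset_leq_card; apply/fintype.subsetP => k; rewrite inE => kj.
apply/imsetP; exists (Ordinal kj); first by rewrite inE.
exact: val_inj.
Qed.

Lemma pigeon (c : 'I_n -> 'I_m -> R) (i : 'I_n) (T : {set 'I_m}) (j : 'I_m) :
  #|T| = j.+1 -> exists2 y, y \in T & c i y <= ido_cost c i j.
Proof.
move=> cT; have [sg [inj sgE mono]] := ido_perm c i.
case: (boolP [exists y in T, c i y <= ido_cost c i j]).
  by move/existsP=> [y /andP [yT hy]]; exists y.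
rewrite negb_exists => /forallP H.
have sub : sg @^-1: T \subset [set k : 'I_m | (k < j)%N].
  apply/fintype.subsetP => k; rewrite !inE => kT; rewrite ltnNge; apply/negP => jk.
  have := H (sg k); rewrite kT /= -ltNge sgE => /(lt_le_trans)/(_ (mono _ _ jk)).
  by rewrite ltxx.
have := leq_trans (subset_leq_card sub) (card_prefix (ltnW (ltn_ord j))).
by rewrite card_preimset // cT ltnn.
Qed.

Lemma ido_ge0 (c : 'I_n -> 'I_m -> R) : (forall i j, 0 <= c i j) ->
  forall i x, 0 <= ido_cost c i x.
Proof. by move=> c0 i x; have [sg [_ -> _]] := ido_perm c i. Qed.

Lemma disjE (A B : {set 'I_m}) : [disjoint A & B] = [forall y, ~~ ((y \in A) && (y \in B))].
Proof.
rewrite -setI_eq0; apply/eqP/forallP => [H y|H].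
  by have := congr1 (fun X : {set 'I_m} => y \in X) H; rewrite !inE => ->.
by apply/setP => y; rewrite !inE; apply/negbTE/H.
Qed.

Lemma reduce_inv (c : 'I_n -> 'I_m -> R) (A' : alloc n m) j B T :
  (forall i j, 0 <= c i j) -> reduce_reach c A' j B T ->
  [/\ #|T| = j, (forall k, [disjoint B k & T]) &
      forall k, bcost (c k) (B k) <= \sum_(x in A' k | (j <= x)%N) ido_cost c k x].
Proof.
move=> c0; elim => [|{}j {}B {}T i x _ [cT dT cB] jA xT xmin].
  split; first by rewrite cardsT card_ord.
    by move=> k; rewrite disjE; apply/forallP => y; rewrite inE.
  move=> k; rewrite /bcost big_set0; apply: sumr_ge0 => y _; exact: ido_ge0.
split.
- by move: cT; rewrite (cardsD1 x) xT add1n => -[].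
- move=> k; rewrite /add_chore; move: (dT k); rewrite !disjE => /forallP H.
  apply/forallP => y; have := H y; case: (k == i); rewrite !inE;
  by case: (y == x) => //=; rewrite ?andbF.
- move=> k; rewrite /add_chore.
  have le1 : \sum_(y in A' k | (j.+1 <= y)%N) ido_cost c k y <=
             \sum_(y in A' k | (j <= y)%N) ido_cost c k y.
    rewrite [X in _ <= X]big_mkcond [X in X <= _]big_mkcond /=; apply: ler_sum => y _.
    case: (y \in A' k) => //=; case: (boolP (j < y)%N) => h; first by rewrite (ltnW h).
    by case: (_ <= _)%N => //; exact: ido_ge0.
  case: eqP => [->|_]; last exact: (le_trans (cB k) le1).
  have xB : x \notin B i.
    by apply/negP => xB; move: (dT i); rewrite disjE => /forallP/(_ x); rewrite xB xT.
  rewrite /bcost big_setU1 //= [X in _ <= X](bigD1 j) /=; last by rewrite jA leqnn.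
  apply: lerD.
    have [y yT hy] := pigeon c i cT.
    exact: le_trans (xmin y yT) hy.
  apply: (le_trans (cB i)); rewrite le_eqVlt; apply/orP; left; apply/eqP.
  apply: eq_bigl => y; rewrite ltn_neqAle eq_sym.
  by case: (y \in A' i); case: (y != j); case: (j <= y)%N.
Qed.

Lemma card_prefix_ge (j : nat) (hj : (j <= m)%N) : (j <= #|[set k : 'I_m | (k < j)%N]|)%N.
Proof.
have inj : injective (widen_ord hj) by move=> x y H; apply: val_inj; exact: (congr1 val H).
apply: (@leq_trans #|widen_ord hj @: [set: 'I_j]|); first by rewrite (card_imset _ inj) cardsT card_ord.
apply: subset_leq_card; apply/fintype.subsetP => k /imsetP [x _ ->]; by rewrite inE /=.
Qed.

Definition cnt (A : alloc n m) (x : 'I_m) := #|[set k | x \in A k]|.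

Lemma sum_bundles (A : alloc n m) (F : 'I_m -> R) :
  \sum_k \sum_(x in A k) F x = \sum_x (cnt A x)%:R * F x.
Proof.
under eq_bigr do rewrite big_mkcond /=.
rewrite exchange_big /=; apply: eq_bigr => x _.
rewrite -big_mkcond /= sumr_const mulr_natl; congr (_ *+ _).
by rewrite /cnt; apply: eq_card => k; rewrite inE.
Qed.

Lemma sum_cards (A : alloc n m) :
  (\sum_k #|A k| = \sum_x cnt A x)%N.
Proof.
under eq_bigr do rewrite -sum1_card big_mkcond /=.
rewrite exchange_big /=; apply: eq_bigr => x _.
rewrite -big_mkcond /= sum1_card.
by rewrite /cnt; apply: eq_card => k; rewrite inE.
Qed.

Lemma sing_card (X : {set 'I_m}) : #|[set x | X == [set x]]| = (#|X| == 1)%N.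
Proof.
case: (@cards1P _ X) => [[y ->]|H].
  rewrite (_ : [set x | _] = [set y]) ?cards1 //; apply/setP => x.
  by rewrite !inE eq_sym; apply/eqP/eqP => [/set1_inj|->].
apply/eqP; rewrite cards_eq0; apply/eqP/setP => x; rewrite !inE.
by apply/negP => /eqP E; apply: H; exists x.
Qed.

Lemma lb2 (A : alloc n m) (j : 'I_m) (i : 'I_n) (d : 'I_m -> R) (a : R) :
  (forall x, 0 <= d x) -> (forall x y : 'I_m, (x <= y)%N -> d y <= d x) ->
  (forall x, cnt A x = (x < j)%N) ->
  (forall k, bcost d (A i) <= bcost d (A k)) ->
  (forall k, A k != finset.set0) ->
  (forall (p : 'I_m -> R) z, price_vector p ->
     (forall S : {set 'I_m}, n%:R^-1 <= \sum_(x in S) p x -> z <= bcost d S) -> z <= a) ->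
  Num.min (bcost d (A i) + d j) (3 * d j) <= a.
Proof.
move=> d0 dmono cntE vmin ne HA.
have n0 : (0 < n)%N by apply: leq_ltn_trans (ltn_ord i).
pose sg (x : 'I_m) := #|[set k | A k == [set x]]|.
pose wn (x : 'I_m) := ((x <= j)%N + sg x)%N.
pose Wn := (\sum_(x : 'I_m) wn x)%N.
have sgle (x : 'I_m) : (sg x <= cnt A x)%N.
  apply: subset_leq_card; apply/fintype.subsetP => k; rewrite !inE => /eqP ->.
  by rewrite inE.
have HW : ((2 * n).+1 <= Wn)%N.
  have h1 : (j.+1 <= \sum_(x : 'I_m) (x <= j)%N)%N.
    rewrite (eq_bigr (fun x : 'I_m => if (x <= j)%N then 1 else 0)%N); last by move=> x _; case: (_ <= _)%N.
    rewrite -big_mkcond sum1_card; apply: (leq_trans (card_prefix_ge (ltn_ord j))).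
    by rewrite leq_eqVlt; apply/orP; left; apply/eqP/eq_card => x; rewrite !inE.
  have h2 : (\sum_(x : 'I_m) sg x = \sum_k (#|A k| == 1))%N.
    rewrite /sg (eq_bigr (fun x : 'I_m => \sum_k (if A k == [set x] then 1 else 0))%N); last first.
      by move=> x _; rewrite -sum1_card big_mkcond /=; apply: eq_bigr => k _; rewrite inE.
    rewrite exchange_big /=; apply: eq_bigr => k _.
    rewrite -big_mkcond /= sum1_card -sing_card.
    by apply: eq_card => x; rewrite !inE.
  have h3 : (\sum_k #|A k| <= j)%N.
    rewrite sum_cards.
    rewrite (eq_bigr (fun x : 'I_m => if (x < j)%N then 1 else 0)%N); last by move=> x _; rewrite cntE; case: (_ < _)%N.
    rewrite -big_mkcond sum1_card; apply: leq_trans (card_prefix (ltnW (ltn_ord j))).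
    by rewrite leq_eqVlt; apply/orP; left; apply/eqP/eq_card => x; rewrite !inE.
  have h4 : (\sum_(k < n) 2 <= \sum_k #|A k| + \sum_k (#|A k| == 1))%N.
    rewrite -big_split /=; apply: leq_sum => k _.
    have : (0 < #|A k|)%N by rewrite card_gt0 ne.
    by case: #|A k| => [|[|q]].
  rewrite sum_nat_const card_ord in h4.
  rewrite /Wn /wn big_split /= h2.
  rewrite mulnC; apply: (leq_ltn_trans h4); rewrite ltn_add2r; exact: leq_ltn_trans h3 h1.
have Wpos : (0 < Wn)%N by apply: leq_ltn_trans HW.
have WR : 0 < (Wn%:R : R) by rewrite ltr0n.
have wnle (x : 'I_m) : (wn x <= 2)%N.
  rewrite /wn; have := sgle x; rewrite cntE; by case: (x <= j)%N; case: (x < j)%N; case: (sg x) => [|[]].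
have wn0 (y : 'I_m) : (0 < wn y)%N -> (y <= j)%N.
  move=> H; have := sgle y; rewrite cntE; move: H; rewrite /wn.
  case: (leqP y j) => // hy.
  have -> : (y < j)%N = false by apply/negbTE; rewrite -leqNgt ltnW.
  by case: (sg y).
pose p (x : 'I_m) : R := (wn x)%:R / Wn%:R.
apply: (HA p) => [|S HS].
  split; first by move=> x; rewrite /p divr_ge0 ?ler0n.
  by rewrite /p -mulr_suml -natr_sum divff // pnatr_eq0 -lt0n.
have ws : (3 <= \sum_(x in S) wn x)%N.
  rewrite /p -mulr_suml -natr_sum ler_pdivlMr // mulrC in HS.
  rewrite -ler_pdivlMr ?invr_gt0 ?ltr0n // in HS.
  rewrite invrK -natrM ler_nat in HS.
  rewrite leqNgt; apply/negP => H2.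
  have : (Wn <= 2 * n)%N by apply: leq_trans HS _; apply: leq_mul.
  by rewrite leqNgt HW.
have bS0 (X : {set 'I_m}) : 0 <= bcost d X by apply: sumr_ge0 => x _.
case: (boolP [exists x in S, (0 < sg x)%N]).
  move=> /existsP [x /andP [xS sgx]].
  move: sgx; rewrite card_gt0 => /set0Pn [k]; rewrite inE => /eqP Ak.
  case: (boolP [exists y in S, (y != x) && (0 < wn y)%N]); last first.
    rewrite negb_exists => /forallP Hn.
    have : (\sum_(y in S) wn y = wn x)%N.
      rewrite (bigD1 x) //= big1 ?addn0 // => y /andP [yS yx].
      by have := Hn y; rewrite yS yx /= lt0n negbK => /eqP.
    move=> E; move: ws; rewrite E => H3; have := wnle x; by rewrite leqNgt H3.
  move=> /existsP [y /andP [yS /andP [yx wy]]].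
  have yj := wn0 y wy.
  rewrite ge_min; apply/orP; left.
  rewrite /bcost [X in _ <= X](bigD1 x) //= [\sum_(i in S | i != x) d i](bigD1 y) /=; last by rewrite yS yx.
  rewrite addrA; apply: ler_wpDr; first by apply: sumr_ge0 => z _.
  apply: lerD; last exact: dmono.
  by have := vmin k; rewrite Ak /bcost big_set1.
rewrite negb_exists => /forallP Hn.
have wE (x : 'I_m) : x \in S -> wn x = (x <= j)%N.
  move=> xS; have := Hn x; rewrite xS /= lt0n negbK => /eqP h.
  by rewrite /wn h addn0.
rewrite ge_min; apply/orP; right.
apply: (@le_trans _ _ (\sum_(x in S) (wn x)%:R * d j)).
  rewrite -mulr_suml -natr_sum; apply: ler_wpM2r; first exact: d0.
  by rewrite (ler_nat R 3).
rewrite /bcost; apply: ler_sum => x xS; rewrite wE //.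
case: (leqP x j) => h; first by rewrite mul1r dmono.
by rewrite mul0r.
Qed.

Lemma core (A : alloc n m) (j : 'I_m) (i : 'I_n) (d : 'I_m -> R) (a : R) :
  (forall x, 0 <= d x) -> (forall x y : 'I_m, (x <= y)%N -> d y <= d x) ->
  (forall x, cnt A x = (x < j)%N) ->
  (forall k, bcost d (A i) <= bcost d (A k)) ->
  (forall (p : 'I_m -> R) z, price_vector p ->
     (forall S : {set 'I_m}, n%:R^-1 <= \sum_(x in S) p x -> z <= bcost d S) -> z <= a) ->
  bcost d (A i) + d j <= (4 * n - 1)%:R / (3 * n)%:R * a.
Proof.
move=> d0 dmono cntE vmin HA.
have n0 : (0 < n)%N by apply: leq_ltn_trans (ltn_ord i).
have nR : 0 < (n%:R : R) by rewrite ltr0n.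
have LB0 : d j <= a.
  apply: (HA (fun x => (x == j)%:R)).
    split; first by move=> x; rewrite ler0n.
    by rewrite (bigD1 j) //= eqxx big1 ?addr0 // => x /negbTE ->.
  move=> S HS; case: (boolP (j \in S)) => jS.
    by rewrite /bcost (bigD1 j) //= lerDl sumr_ge0.
  move: HS; rewrite big1; last first.
    move=> x xS; case: eqP => // E; by move: jS; rewrite -E xS.
  by rewrite leNgt invr_gt0 nR.
have a0 : 0 <= a := le_trans (d0 j) LB0.
pose D := \sum_(x : 'I_m) d x.
have D0 : 0 <= D by apply: sumr_ge0.
have LB1 : D / n%:R <= a.
  case: (eqVneq D 0) => [->|Dn0]; first by rewrite mul0r.
  have Dp : 0 < D by rewrite lt_def Dn0 D0.
  apply: (HA (fun x => d x / D)).
    split; first by move=> x; rewrite divr_ge0.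
    by rewrite -mulr_suml divff.
  move=> S; rewrite -mulr_suml ler_pdivlMr // => H.
  by rewrite mulrC.
have sumA : \sum_k bcost d (A k) = \sum_(x : 'I_m | (x < j)%N) d x.
  rewrite /bcost sum_bundles [in RHS]big_mkcond; apply: eq_bigr => x _.
  by rewrite cntE; case: (x < j)%N; rewrite ?mul1r ?mul0r.
have sumle : \sum_(x : 'I_m | (x < j)%N) d x + d j <= D.
  rewrite /D [X in _ <= X](bigD1 j) //= [X in X <= _]addrC lerD2l.
  rewrite big_mkcond [X in _ <= X]big_mkcond; apply: ler_sum => x _.
  case: ltnP => h; last by case: (x != j).
  by rewrite (_ : (x != j) = true) //; apply/eqP => E; rewrite E ltnn in h.
have nv : n%:R * bcost d (A i) <= \sum_k bcost d (A k).
  have : \sum_(k < n) bcost d (A i) <= \sum_k bcost d (A k) by apply: ler_sum => k _; exact: vmin.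
  by rewrite sumr_const card_ord mulr_natl.
rewrite sumA in nv.
rewrite mulrAC ler_pdivlMr ?ltr0n ?muln_gt0 // natrB ?muln_gt0 // !natrM.
move: nv LB1; set N := (n%:R : R); set v := bcost d (A i) => nv LB1.
have N1 : 1 <= N by rewrite /N ler1n.
rewrite ler_pdivrMr // in LB1.
case: (boolP [exists k, A k == finset.set0]).
  move=> /existsP [k /eqP Ak].
  have v0 : v <= 0 by have := vmin k; rewrite Ak /bcost big_set0.
  have h1 : 0 <= (N - 1) * a by rewrite mulr_ge0 // subr_ge0.
  have h2 : 0 <= N * (a - d j) by rewrite mulr_ge0 // ?subr_ge0 // ltW.
  have h3 : 0 <= N * (- v) by rewrite mulr_ge0 ?oppr_ge0 // ltW.
  lra.
rewrite negb_exists => /forallP ne.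
have := lb2 d0 dmono cntE vmin ne HA; rewrite ge_min => /orP [h|h].
  have h1 : 0 <= (N - 1) * a by rewrite mulr_ge0 // subr_ge0.
  have h2 : 0 <= N * (a - (v + d j)) by rewrite mulr_ge0 // ?subr_ge0 // ltW.
  lra.
have h1 : 0 <= (N - 1) * (a - 3 * d j) by rewrite mulr_ge0 // subr_ge0.
lra.
Qed.

Lemma APS_ge0 (ci : 'I_m -> R) (b : R) : (forall j, 0 <= ci j) -> b <= 1 -> 0 <= APS ci b.
Proof.
move=> c0 b1; case: (posnP m) => [m0|mpos].
  rewrite /APS (_ : [set v | exists p, price_vector p /\ v = aps_value ci b p]%classic = set0%classic) ?sup0 //.
  apply/seteqP; split => // v [p [[_ p1] _]].
  move: p1; rewrite big1 => [/esym/eqP|j]; first by rewrite oner_eq0.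
  by move=> _; have := ltn_ord j; rewrite {2}m0.
apply: (@aps_lb _ _ (fun x => (x == Ordinal mpos)%:R)) => //.
  split; first by move=> x; rewrite ler0n.
  rewrite (bigD1 (Ordinal mpos)) //=.
  by rewrite big1 ?addr0 // => x /negbTE ->.
by move=> S _; apply: sumr_ge0.
Qed.

Lemma rotate_inv (c' : 'I_n -> 'I_m -> R) (A A2 : alloc n m) : rotate c' A A2 ->
  (forall x, cnt A2 x = cnt A x) /\ (forall k, bcost (c' k) (A2 k) <= bcost (c' k) (A k)).
Proof.
move=> [s [[sne us env] HA2]].
pose pi k := if k \in s then next s k else k.
have inj : injective pi.
  move=> x y; rewrite /pi; case: (boolP (x \in s)) => xs; case: (boolP (y \in s)) => ys.
  - exact: (can_inj (prev_next us)).
  - by move=> E; move: ys; rewrite -E mem_next xs.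
  - by move=> E; move: xs; rewrite E mem_next ys.
  - done.
split.
  move=> x; rewrite /cnt -[in RHS](card_preimset _ inj); apply: eq_card => k.
  by rewrite !inE HA2 /pi; case: (k \in s).
move=> k; rewrite HA2; case: (boolP (k \in s)) => ks //.
exact: ltW (env k ks).
Qed.

Lemma rotations_inv (c' : 'I_n -> 'I_m -> R) (A A2 : alloc n m) : rotations c' A A2 ->
  (forall x, cnt A2 x = cnt A x) /\ (forall k, bcost (c' k) (A2 k) <= bcost (c' k) (A k)).
Proof.
elim => [A0|A0 B C rot _ [IH1 IH2]]; first by split.
have [h1 h2] := rotate_inv rot; split; first by move=> x; rewrite IH1 h1.
by move=> k; exact: le_trans (IH2 k) (h2 k).
Qed.

Definition bnd (c : 'I_n -> 'I_m -> R) k :=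
  (4 * n - 1)%:R / (3 * n)%:R * APS (c k) (n%:R^-1).

Lemma ido_inv (c : 'I_n -> 'I_m -> R) j A : (forall i j, 0 <= c i j) ->
  algchores_ido_reach (ido_cost c) j A ->
  (forall x, cnt A x = (x < j)%N) /\ (forall k, bcost (ido_cost c k) (A k) <= bnd c k).
Proof.
move=> c0; elim => [|{}j {}A A2 i _ [IHc IHb] noenv rots _].
  split.
    move=> x; rewrite /cnt /empty_alloc (_ : [set k | _] = finset.set0) ?cards0 //.
    by apply/setP => k; rewrite !inE.
  move=> k; have n0 : (0 < n)%N := leq_ltn_trans (leq0n k) (ltn_ord k).
  rewrite /bcost /empty_alloc big_set0 /bnd mulr_ge0 ?divr_ge0 ?ler0n //.
  by apply: APS_ge0 => //; rewrite invr_le1 ?ler1n ?unitfE ?pnatr_eq0 -?lt0n ?ltr0n.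
have [r1 r2] := rotations_inv rots.
have jA k : j \notin A k.
  apply/negP => jk; have := IHc j; rewrite ltnn /cnt => /eqP; rewrite cards_eq0 => /eqP E.
  by have := congr1 (fun X : {set 'I_n} => k \in X) E; rewrite !inE jk.
split.
  move=> x; rewrite r1 /cnt /add_chore; case: (eqVneq x j) => [->|xj].
    rewrite ltnSn (_ : [set k | _] = [set i]) ?cards1 //; apply/setP => k; rewrite !inE.
    by case: (eqVneq k i) => [->|_]; rewrite ?setU11 // (negbTE (jA k)).
  rewrite ltnS leq_eqVlt (_ : (x == j :> nat) = false) /=; last by apply/negbTE.
  rewrite -IHc /cnt; apply: eq_card => k; rewrite !inE.
  by case: (k == i); rewrite ?inE ?(negbTE xj).
move=> k; apply: le_trans (r2 k) _; rewrite /add_chore.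
case: (eqVneq k i) => [->|_]; last exact: IHb.
have [sg [inj sgE mono]] := ido_perm c i.
rewrite /bcost big_setU1 ?jA //= addrC.
apply: core => //.
- by move=> x; apply: ido_ge0.
- by move=> x y xy; rewrite !sgE; apply: mono.
- by move=> k2; rewrite leNgt; apply/negP => H; apply: (noenv k2).
- move=> p z pv HS; apply: (aps_lb_perm inj sgE pv) => //.
  have n0 : (0 < n)%N := leq_ltn_trans (leq0n i) (ltn_ord i).
  by rewrite invr_le1 ?ler1n ?unitfE ?pnatr_eq0 -?lt0n ?ltr0n.
Qed.
End Aux.

Theorem theorem4 (R : realType) (n m : nat) (c : 'I_n -> 'I_m -> R) :
  (forall i j, 0 <= c i j) ->
  forall B : alloc n m, algchores c B ->
  forall i : 'I_n,
    bcost (c i) (B i) <=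
      ((4 * n - 1)%:R / (3 * n)%:R) * APS (c i) (n%:R)^-1.
Proof.
move=> c0 B [A' [HA' [T HT]]] i.
have [_ Hb] := ido_inv c0 HA'.
have [_ _ Hr] := reduce_inv c0 HT.
apply: le_trans (Hr i) _; apply: le_trans (Hb i).
by rewrite le_eqVlt; apply/orP; left; apply/eqP; apply: eq_bigl => x; rewrite leq0n andbT.
Qed.
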